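(* Let $q_1,q_2$ be integers with $1\le q_1\le q_2$, $A=\begin{pmatrix}3q_1&0\\0&3q_2\end{pmatrix}$, $\mathcal{D}=\left\{\begin{pmatrix}0\\0\end{pmatrix},\begin{pmatrix}1\\0\end{pmatrix},\begin{pmatrix}0\\1\end{pmatrix}\right\}$. For $n\ge0$ let $\nu_n=\delta_{A^{-(n+1)}\mathcal{D}}*\delta_{A^{-(n+2)}\mathcal{D}}*\cdots$ (infinite convolution). Let $n\ge1$ and suppose $\Lambda$ is an orthogonal set of $\nu_n$. Then $\Lambda$ is an orthogonal set of $\nu_{n-1}$, but $\Lambda$ is not a maximal orthogonal set of $\nu_{n-1}$.
   Context: For a finite set $E\subseteq\mathbb{R}^2$, $\delta_E=\frac{1}{\#E}\sum_{e\in E}\delta_e$ is the uniform probability measure on $E$; the infinite convolution converges weakly to a Borel probability measure ($\nu_0$ is the self-affine measure $\mu_{A,\mathcal{D}}$). A countable $\Lambda\subseteq\mathbb{R}^2$ is an orthogonal set of $\mu$ if $\{e^{-2\pi i\langle\lambda,x\rangle}:\lambda\in\Lambda\}$ is orthogonal in $L^2(\mu)$; it is maximal if it is not properly contained in another orthogonal set of $\mu$. *)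

(* Defs.v *)
From HB Require Import structures.
From mathcomp Require Import all_boot all_order all_algebra.
From mathcomp Require Import all_classical all_reals all_analysis.
Set Implicit Arguments. Unset Strict Implicit. Unset Printing Implicit Defensive.
Import Order.TTheory GRing.Theory Num.Theory.
Import numFieldNormedType.Exports.
Local Open Scope classical_set_scope.
Local Open Scope ring_scope.

(* Points of R^2 are modelled as pairs (R * R), with the product (= Borel)
   sigma-algebra and the product topology. *)

Section Defs.
Variable R : realType.

Definition digit_x (i : 'I_3) : R := if val i == 1%N then 1 else 0.
Definition digit_y (i : 'I_3) : R := if val i == 2%N then 1 else 0.

Definition conv_point (q1 q2 n N : nat) (w : {ffun 'I_N -> 'I_3}) : R * R :=
  (\sum_(j < N) digit_x (w j) / (3 * q1)%:R ^+ (n + j + 1),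
   \sum_(j < N) digit_y (w j) / (3 * q2)%:R ^+ (n + j + 1)).

(* Integral of f against the finite convolution
   delta_{A^{-(n+1)}D} * ... * delta_{A^{-(n+N)}D}. *)
Definition finite_conv_int (q1 q2 n N : nat) (f : R * R -> R) : R :=
  (3%:R ^+ N)^-1 * \sum_(w : {ffun 'I_N -> 'I_3}) f (conv_point q1 q2 n w).

(* mu is nu_n = delta_{A^{-(n+1)}D} * delta_{A^{-(n+2)}D} * ...,
   i.e. the weak limit of the finite convolutions. *)
Definition is_nu (q1 q2 n : nat) (mu : probability (R * R)%type R) : Prop :=
  forall f : R * R -> R, continuous f -> (exists M : R, forall x, `|f x| <= M) ->
    (fun N => finite_conv_int q1 q2 n N f) @ \oo --> Rintegral mu setT f.

Definition dot2 (l x : R * R) : R := l.1 * x.1 + l.2 * x.2.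

(* <e_l, e_l'>_{L^2(mu)} = \int exp(-2 pi i <l - l', x>) dmu; it vanishes iff
   its real part (cos integral) and imaginary part (sin integral) vanish. *)
Definition orthogonal_set (mu : probability (R * R)%type R) (L : set (R * R)) : Prop :=
  countable L /\
  forall l l', L l -> L l' -> l <> l' ->
    Rintegral mu setT (fun x => cos (2 * pi * dot2 (l.1 - l'.1, l.2 - l'.2) x)) = 0 /\
    Rintegral mu setT (fun x => sin (2 * pi * dot2 (l.1 - l'.1, l.2 - l'.2) x)) = 0.

Definition maximal_orthogonal_set (mu : probability (R * R)%type R) (L : set (R * R)) : Prop :=
  orthogonal_set mu L /\
  forall L', orthogonal_set mu L' -> L `<=` L' -> L' = L.

End Defs.

(* Main.v *)
Set Warnings "-notation-overridden,-ambiguous-paths,-notation-incompatible-prefix".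
Require Import Defs.
From HB Require Import structures.
From mathcomp Require Import all_boot all_order all_algebra.
From mathcomp Require Import all_classical all_reals all_analysis.
Import Order.TTheory GRing.Theory Num.Theory.
Import numFieldNormedType.Exports.
Local Open Scope classical_set_scope.
Local Open Scope ring_scope.
From mathcomp Require Import ring lra zify.

Section Aux.
Variables (R : realType) (q1 q2 : nat).

Definition tx n (i : 'I_3) : R := digit_x R i / (3 * q1)%:R ^+ (n + 0 + 1).
Definition ty n (i : 'I_3) : R := digit_y R i / (3 * q2)%:R ^+ (n + 0 + 1).

Definition hcons N (p : 'I_3 * {ffun 'I_N -> 'I_3}) : {ffun 'I_N.+1 -> 'I_3} :=
  [ffun j => match unlift ord0 j with Some k => p.2 k | None => p.1 end].
Definition hdec N (w : {ffun 'I_N.+1 -> 'I_3}) : 'I_3 * {ffun 'I_N -> 'I_3} :=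
  (w ord0, [ffun k => w (lift ord0 k)]).

Arguments hcons {N}.
Arguments hdec {N}.
Lemma hcons_bij N : bijective (@hcons N).
Proof.
exists (@hdec N).
- move=> [i G]; rewrite /hdec /hcons /= ffunE unlift_none; congr (_, _).
  by apply/ffunP => k; rewrite !ffunE liftK.
- move=> w; apply/ffunP => j; rewrite /hdec /hcons ffunE.
  by case: unliftP => [k ->|->]; rewrite ?ffunE.
Qed.

Lemma conv_point_cons n N (p : 'I_3 * {ffun 'I_N -> 'I_3}) :
  conv_point R q1 q2 n (hcons p) =
  (tx n p.1 + (conv_point R q1 q2 n.+1 p.2).1,
   ty n p.1 + (conv_point R q1 q2 n.+1 p.2).2).
Proof.
rewrite /conv_point /= !big_ord_recl /= /hcons !ffunE unlift_none.
congr (_ + _, _ + _); apply: eq_bigr => j _; rewrite ffunE liftK;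
  congr (_ / _ ^+ _); rewrite /bump /=; lia.
Qed.

Lemma fci_split n N (f : R * R -> R) :
  finite_conv_int q1 q2 n N.+1 f =
  3^-1 * \sum_(i < 3) finite_conv_int q1 q2 n.+1 N
           (fun x => f (tx n i + x.1, ty n i + x.2)).
Proof.
rewrite /finite_conv_int (reindex (@hcons N)) /=; last first.
  by apply: onW_bij; exact: hcons_bij.
have -> : \sum_(p : 'I_3 * {ffun 'I_N -> 'I_3}) f (conv_point R q1 q2 n (hcons p))
  = \sum_(i < 3) \sum_(G : {ffun 'I_N -> 'I_3})
       f (tx n i + (conv_point R q1 q2 n.+1 G).1, ty n i + (conv_point R q1 q2 n.+1 G).2).
  rewrite pair_big /=; apply: eq_bigr => -[i G] _; by rewrite conv_point_cons.
rewrite mulr_sumr mulr_sumr; apply: eq_bigr => i _.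
by rewrite exprS invfM mulrA.
Qed.

Lemma fci_lin n N a b (f g : R * R -> R) :
  finite_conv_int q1 q2 n N (fun x => a * f x + b * g x) =
  a * finite_conv_int q1 q2 n N f + b * finite_conv_int q1 q2 n N g.
Proof.
rewrite /finite_conv_int big_split /= -!mulr_sumr; ring.
Qed.

Lemma fci_ext n N (f g : R * R -> R) : f =1 g ->
  finite_conv_int q1 q2 n N f = finite_conv_int q1 q2 n N g.
Proof. by move=> fg; rewrite /finite_conv_int; congr (_ * _); apply: eq_bigr. Qed.

End Aux.

Section Four.
Variables (R : realType) (q1 q2 : nat).
Local Notation tx := (@tx R q1).
Local Notation ty := (@ty R q2).

Definition Fc n N (z : R * R) := finite_conv_int q1 q2 n N (fun x => cos (2 * pi * dot2 z x)).
Definition Fs n N (z : R * R) := finite_conv_int q1 q2 n N (fun x => sin (2 * pi * dot2 z x)).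
Definition eta n (z : R * R) : R * R :=
  (z.1 / (3 * q1)%:R ^+ n.+1, z.2 / (3 * q2)%:R ^+ n.+1).
Definition mk (e : R * R) : R * R :=
  ((1 + cos (2 * pi * e.1) + cos (2 * pi * e.2)) / 3,
   (sin (2 * pi * e.1) + sin (2 * pi * e.2)) / 3).
Definition alpha n (z : R * R) (i : 'I_3) := 2 * pi * (z.1 * tx n i + z.2 * ty n i).

Lemma sum_alpha n z (F : R -> R) :
  \sum_(i < 3) F (alpha n z i) = F 0 + F (2 * pi * (eta n z).1) + F (2 * pi * (eta n z).2).
Proof.
rewrite !big_ord_recl big_ord0 /alpha /tx /ty /digit_x /digit_y /eta /= !addn0 !addn1.
rewrite addr0 addrA; congr (F _ + F _ + F _); ring.
Qed.

Lemma Fc_rec n N z :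
  Fc n N.+1 z = (mk (eta n z)).1 * Fc n.+1 N z - (mk (eta n z)).2 * Fs n.+1 N z.
Proof.
rewrite /Fc fci_split.
have E : forall i, finite_conv_int q1 q2 n.+1 N
   (fun x => cos (2 * pi * dot2 z (tx n i + x.1, ty n i + x.2))) =
   cos (alpha n z i) * Fc n.+1 N z + (- sin (alpha n z i)) * Fs n.+1 N z.
  move=> i; rewrite -fci_lin; apply: fci_ext => x.
  rewrite /alpha /dot2 /= mulNr -/(_ - _) -cosD; congr cos; ring.
rewrite (eq_bigr _ (fun i _ => E i)) big_split /=.
rewrite (sum_alpha n z (fun t => cos t * Fc n.+1 N z)) (sum_alpha n z (fun t => - sin t * Fs n.+1 N z)).
rewrite cos0 sin0 /mk /=; rewrite -/(Fc n.+1 N z); by field.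
Qed.

Lemma Fs_rec n N z :
  Fs n N.+1 z = (mk (eta n z)).2 * Fc n.+1 N z + (mk (eta n z)).1 * Fs n.+1 N z.
Proof.
rewrite /Fs fci_split.
have E : forall i, finite_conv_int q1 q2 n.+1 N
   (fun x => sin (2 * pi * dot2 z (tx n i + x.1, ty n i + x.2))) =
   sin (alpha n z i) * Fc n.+1 N z + cos (alpha n z i) * Fs n.+1 N z.
  move=> i; rewrite /Fc /Fs -fci_lin; apply: fci_ext => x.
  rewrite /alpha /dot2 /= -sinD; congr sin; ring.
rewrite (eq_bigr _ (fun i _ => E i)) big_split /=.
rewrite (sum_alpha n z (fun t => sin t * Fc n.+1 N z)) (sum_alpha n z (fun t => cos t * Fs n.+1 N z)).
rewrite cos0 sin0 /mk /=; rewrite -/(Fs n.+1 N z); by field.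
Qed.

End Four.

Section Four2.
Variables (R : realType) (q1 q2 : nat).
Local Notation Fc := (@Fc R q1 q2).
Local Notation Fs := (@Fs R q1 q2).
Local Notation eta := (@eta R q1 q2).
Local Notation mk := (@mk R).

Definition nsq (u : R * R) := u.1 ^+ 2 + u.2 ^+ 2.

Lemma fci0 n (f : R * R -> R) : finite_conv_int q1 q2 n 0 f = f (0, 0).
Proof.
rewrite /finite_conv_int expr0 invr1 mul1r.
rewrite (eq_bigr (fun _ => f (0, 0))); last first.
  by move=> w _; rewrite /conv_point !big_ord0.
by rewrite sumr_const card_ffun !card_ord expn0.
Qed.

Lemma Fc0 n z : Fc n 0 z = 1.
Proof. by rewrite /Fc fci0 /dot2 /= !mulr0 addr0 mulr0 cos0. Qed.
Lemma Fs0 n z : Fs n 0 z = 0.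
Proof. by rewrite /Fs fci0 /dot2 /= !mulr0 addr0 mulr0 sin0. Qed.

Lemma nsq_prod N n z :
  nsq (Fc n N z, Fs n N z) = \prod_(j < N) nsq (mk (eta (n + j) z)).
Proof.
elim: N n => [|N IH] n.
  by rewrite big_ord0 /nsq /= Fc0 Fs0 expr1n expr0n addr0.
rewrite big_ord_recl addn0.
have -> : \prod_(i < N) nsq (mk (eta (n + bump 0 i) z)) =
          \prod_(i < N) nsq (mk (eta (n.+1 + i) z)).
  by apply: eq_bigr => i _; rewrite /bump /= add1n addSn addnS.
rewrite -IH /nsq Fc_rec Fs_rec.
move: (mk (eta n z)) (Fc n.+1 N z) (Fs n.+1 N z) => [a b] c d /=; ring.
Qed.

End Four2.

Lemma cont_fst (R : realType) : continuous (fun x : R * R => x.1).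
Proof. move=> x; exact: cvg_fst. Qed.
Lemma cont_snd (R : realType) : continuous (fun x : R * R => x.2).
Proof. move=> x; exact: cvg_snd. Qed.
Lemma cont_dot (R : realType) (z : R * R) :
  continuous (fun x : R * R => 2 * pi * dot2 z x).
Proof.
move=> x; rewrite /dot2; apply: cvgM; first exact: cvg_cst.
apply: cvgD; apply: cvgM; (try exact: cvg_cst).
exact: cont_fst. exact: cont_snd.
Qed.
Lemma cont_cos_dot (R : realType) (z : R * R) :
  continuous (fun x : R * R => cos (2 * pi * dot2 z x)).
Proof. move=> x; apply: continuous_comp; [exact: cont_dot | exact: continuous_cos]. Qed.
Lemma cont_sin_dot (R : realType) (z : R * R) :
  continuous (fun x : R * R => sin (2 * pi * dot2 z x)).
Proof. move=> x; apply: continuous_comp; [exact: cont_dot | exact: continuous_sin]. Qed.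

Section Lim.
Variables (R : realType) (q1 q2 : nat).
Local Notation Fc := (@Fc R q1 q2).
Local Notation Fs := (@Fs R q1 q2).
Local Notation eta := (@eta R q1 q2).
Local Notation mk := (@mk R).

Definition Cm (mu : probability (R * R)%type R) (z : R * R) :=
  Rintegral mu setT (fun x => cos (2 * pi * dot2 z x)).
Definition Sm (mu : probability (R * R)%type R) (z : R * R) :=
  Rintegral mu setT (fun x => sin (2 * pi * dot2 z x)).

Lemma nu_Fc m mu z : is_nu q1 q2 m mu -> (fun N => Fc m N z) @ \oo --> Cm mu z.
Proof. move=> h; apply: h; [exact: cont_cos_dot | exists 1 => x; exact: cos_max]. Qed.
Lemma nu_Fs m mu z : is_nu q1 q2 m mu -> (fun N => Fs m N z) @ \oo --> Sm mu z.
Proof. move=> h; apply: h; [exact: cont_sin_dot | exists 1 => x; exact: sin_max]. Qed.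

Lemma conv_id m mu mu' z : is_nu q1 q2 m mu -> is_nu q1 q2 m.+1 mu' ->
  Cm mu z = (mk (eta m z)).1 * Cm mu' z - (mk (eta m z)).2 * Sm mu' z /\
  Sm mu z = (mk (eta m z)).2 * Cm mu' z + (mk (eta m z)).1 * Sm mu' z.
Proof.
move=> h h'; split.
- have h1 := nu_Fc m mu z h; rewrite -cvg_shiftS in h1.
  have h2 : (fun N => Fc m N.+1 z) @ \oo -->
     (mk (eta m z)).1 * Cm mu' z - (mk (eta m z)).2 * Sm mu' z.
    under eq_fun do rewrite Fc_rec.
    by apply: cvgB; apply: cvgM; (try exact: cvg_cst); [exact: nu_Fc | exact: nu_Fs].
  exact: (cvg_unique _ h1 h2).
- have h1 := nu_Fs m mu z h; rewrite -cvg_shiftS in h1.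
  have h2 : (fun N => Fs m N.+1 z) @ \oo -->
     (mk (eta m z)).2 * Cm mu' z + (mk (eta m z)).1 * Sm mu' z.
    under eq_fun do rewrite Fs_rec.
    by apply: cvgD; apply: cvgM; (try exact: cvg_cst); [exact: nu_Fc | exact: nu_Fs].
  exact: (cvg_unique _ h1 h2).
Qed.

End Lim.

Section Trig.
Variable R : realType.

Lemma sin_le_pos (y : R) : 0 < y -> `|sin y| <= y.
Proof.
move=> y0.
have : exists2 c, c \in `]0, y[ & sin y - sin 0 = cos c * (y - 0).
  apply: (@MVT R sin cos 0 y y0); try (move=> x hx; exact: is_derive_sin).
  by apply: continuous_subspaceT; exact: continuous_sin.
move=> [c _ hc].
move: hc; rewrite sin0 !subr0 => hc; rewrite hc.
rewrite normrM (gtr0_norm y0); apply: ler_piMl; [exact: ltW | exact: cos_max].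
Qed.

Lemma sin_le_abs (y : R) : `|sin y| <= `|y|.
Proof.
have [y0|y0|->] := ltrgtP y 0; last by rewrite sin0 normr0.
- by rewrite -normrN -sinN (ltr0_norm y0); apply: sin_le_pos; rewrite oppr_gt0.
- by rewrite (gtr0_norm y0); apply: sin_le_pos.
Qed.

Lemma cos_lb (x : R) : 1 - x ^+ 2 / 2 <= cos x.
Proof.
have -> : x = (x / 2) *+ 2 by rewrite -mulr_natr mulfVK.
rewrite cos_mulr2n.
have h := sin_le_abs (x / 2).
have h2 : sin (x / 2) ^+ 2 <= (x / 2) ^+ 2.
  by rewrite -real_normK ?num_real // -[X in _ <= X]real_normK ?num_real // lerXn2r ?nnegrE.
rewrite cos2sin2.
rewrite -[(x / 2) *+ 2]mulr_natr.
nra.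
Qed.

End Trig.

Section NV.
Variables (R : realType) (q1 q2 : nat).
Local Notation Fc := (@Fc R q1 q2).
Local Notation Fs := (@Fs R q1 q2).
Local Notation eta := (@eta R q1 q2).
Local Notation mk := (@mk R).
Local Notation nsq := (@nsq R).

Lemma pow_mono (x y : R) p : 0 <= x -> x <= y -> x ^+ p <= y ^+ p.
Proof.
move=> x0 xy; elim: p => [|p IH]; first by rewrite !expr0.
rewrite !exprS; apply: ler_pM => //; exact: exprn_ge0.
Qed.

Lemma weier N (e : nat -> R) : (forall i, 0 <= e i <= 1) ->
  1 - \sum_(i < N) e i <= \prod_(i < N) (1 - e i).
Proof.
move=> he; elim: N => [|N IH]; first by rewrite big_ord0 big_ord0 subr0.
rewrite big_ord_recr big_ord_recr /=.
have /andP[e0 e1] := he N.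
have P0 : 0 <= \prod_(i < N) (1 - e i).
  by apply: prodr_ge0 => i _; have /andP[_ ?] := he i; rewrite subr_ge0.
have S0 : 0 <= \sum_(i < N) e i.
  by apply: sumr_ge0 => i _; have /andP[? _] := he i.
set P := \prod_(i < N) _ in IH P0 *; set S := \sum_(i < N) _ in IH S0 *.
nra.
Qed.

Lemma geom_sum N : \sum_(j < N) (2^-1 : R) ^+ j.+2 = 2^-1 - 2^-1 ^+ N.+1.
Proof.
elim: N => [|N IH]; first by rewrite big_ord0 expr1 subrr.
rewrite big_ord_recr /= IH !exprS; by field.
Qed.

Lemma nsq_ge0 (u : R * R) : 0 <= nsq u.
Proof. rewrite /nsq; apply: addr_ge0; exact: sqr_ge0. Qed.

Lemma nsq_gt0 (u : R * R) : u <> (0, 0) -> 0 < nsq u.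
Proof.
move=> hu; rewrite lt_neqAle nsq_ge0 andbT; apply/eqP => h.
apply: hu; move: h; rewrite /nsq; case: u => a b /= h.
have ha : a ^+ 2 = 0 by apply/eqP; rewrite eq_le sqr_ge0 andbT; nra.
have hb : b ^+ 2 = 0 by apply/eqP; rewrite eq_le sqr_ge0 andbT; nra.
by move/eqP: ha; rewrite sqrf_eq0 => /eqP ->; move/eqP: hb; rewrite sqrf_eq0 => /eqP ->.
Qed.

Lemma mk_lb (e : R * R) :
  ((2 * pi * e.1) ^+ 2 + (2 * pi * e.2) ^+ 2) / 3 <= 1 ->
  1 - ((2 * pi * e.1) ^+ 2 + (2 * pi * e.2) ^+ 2) / 3 <= nsq (mk e).
Proof.
move=> h; rewrite /nsq /mk /=.
have ca := @cos_lb R (2 * pi * e.1); have cb := @cos_lb R (2 * pi * e.2).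
set a := 2 * pi * e.1 in h ca cb *; set b := 2 * pi * e.2 in h ca cb *.
have hs := sqr_ge0 ((sin a + sin b) / 3).
set c := (1 + cos a + cos b) / 3.
have hc : 1 - (a ^+ 2 + b ^+ 2) / 6 <= c by rewrite /c; lra.
have ha := sqr_ge0 a; have hb := sqr_ge0 b.
nra.
Qed.

Lemma div_mono (a d D : R) : 0 <= a -> 0 < d -> d <= D -> a / D <= a / d.
Proof.
move=> a0 d0 dD; apply: ler_wpM2l => //.
by rewrite lef_pV2 ?posrE // (lt_le_trans d0 dD).
Qed.

Lemma X_ge (q : nat) p : (1 <= q)%N -> 2 ^+ p <= ((3 * q)%:R ^+ p.+1 : R) ^+ 2 /\ 1 <= ((3 * q)%:R ^+ p.+1 : R).
Proof.
move=> q1'; set x : R := (3 * q)%:R.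
have x2 : 2 <= x.
  rewrite /x natrM; have h : (1 : R) <= q%:R by rewrite ler1n.
  nra.
have xp : 2 ^+ p <= x ^+ p by apply: pow_mono.
have p1 : 1 <= 2 ^+ p :> R by apply: exprn_ege1; rewrite ler1n.
have X1 : 1 <= x ^+ p.+1 by rewrite exprS; nra.
split => //; rewrite expr2 exprS.
set y := x ^+ p in xp *.
have h1 : y <= x * y by nra.
have h2 : x * y <= (x * y) * (x * y) by nra.
lra.
Qed.

Lemma eta_bound p z : (1 <= q1)%N -> (1 <= q2)%N ->
  ((2 * pi * (eta p z).1) ^+ 2 + (2 * pi * (eta p z).2) ^+ 2) / 3 <=
  ((2 * pi * z.1) ^+ 2 + (2 * pi * z.2) ^+ 2) / 3 / 2 ^+ p.
Proof.
move=> h1 h2; rewrite /eta /=.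
have [A1 A2] := X_ge q1 p h1; have [B1 B2] := X_ge q2 p h2.
set X := ((3 * q1)%:R ^+ p.+1 : R) in A1 A2 *.
set Y := ((3 * q2)%:R ^+ p.+1 : R) in B1 B2 *.
have e1 : (2 * pi * (z.1 / X)) ^+ 2 = (2 * pi * z.1) ^+ 2 / X ^+ 2.
  by rewrite mulrA expr_div_n.
have e2 : (2 * pi * (z.2 / Y)) ^+ 2 = (2 * pi * z.2) ^+ 2 / Y ^+ 2.
  by rewrite mulrA expr_div_n.
rewrite e1 e2.
have p0 : 0 < 2 ^+ p :> R by rewrite exprn_gt0.
have d1 := div_mono _ _ _ (sqr_ge0 (2 * pi * z.1)) p0 A1.
have d2 := div_mono _ _ _ (sqr_ge0 (2 * pi * z.2)) p0 B1.
have -> : ((2 * pi * z.1) ^+ 2 + (2 * pi * z.2) ^+ 2) / 3 / 2 ^+ p =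
  ((2 * pi * z.1) ^+ 2 / 2 ^+ p + (2 * pi * z.2) ^+ 2 / 2 ^+ p) / 3.
  by field; rewrite gt_eqF.
lra.
Qed.

End NV.

Section NV2.
Variables (R : realType) (q1 q2 : nat).
Local Notation Fc := (@Fc R q1 q2).
Local Notation Fs := (@Fs R q1 q2).
Local Notation eta := (@eta R q1 q2).
Local Notation mk := (@mk R).
Local Notation nsq := (@nsq R).
Local Notation Cm := (@Cm R).
Local Notation Sm := (@Sm R).

Lemma tail_bound (K : R) k J j : 0 <= K -> 4 * K <= 2 ^+ J ->
  K / 2 ^+ (k + (J + j)) <= (2^-1) ^+ j.+2.
Proof.
move=> K0 hJ.
rewrite ler_pdivrMr ?exprn_gt0 //.
have -> : (2^-1 : R) ^+ j.+2 * 2 ^+ (k + (J + j)) = 2 ^+ k * 2 ^+ J / 4.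
  rewrite !exprD exprVn !exprS; field; rewrite ?gt_eqF ?exprn_gt0 //.
have : 1 <= 2 ^+ k :> R by apply: exprn_ege1; rewrite ler1n.
have : 0 <= 2 ^+ J :> R by rewrite exprn_ge0.
nra.
Qed.

Lemma NV k mu z : (1 <= q1)%N -> (1 <= q2)%N -> is_nu q1 q2 k mu ->
  Cm mu z = 0 -> Sm mu z = 0 -> exists j, mk (eta (k + j) z) = (0, 0).
Proof.
move=> h1 h2 hnu hC hS.
apply: contrapT => hne.
have hg : forall j, 0 < nsq (mk (eta (k + j) z)).
  by move=> j; apply: nsq_gt0 => E; apply: hne; exists j.
set K : R := ((2 * pi * z.1) ^+ 2 + (2 * pi * z.2) ^+ 2) / 3.
have K0 : 0 <= K by rewrite /K; apply: divr_ge0 => //; apply: addr_ge0; exact: sqr_ge0.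
have [J hJ] : exists J : nat, 4 * K <= 2 ^+ J.
  have hb := archi_boundP (mulr_ge0 (ler0n R 4) K0).
  set J := Num.Def.archi_bound _ in hb.
  exists J; apply: (le_trans (ltW hb)).
  rewrite -natrX ler_nat; exact: ltnW (ltn_expl _ _).
have tail : forall j, 1 - (2^-1) ^+ j.+2 <= nsq (mk (eta (k + (J + j)) z)).
  move=> j.
  have eb := @eta_bound R q1 q2 (k + (J + j)) z h1 h2.
  have tb := tail_bound K k J j K0 hJ.
  have hh : (0:R) <= 2^-1 /\ (2^-1 : R) <= 1 by split; lra.
  have t1 : (2^-1 : R) ^+ j.+2 <= 1 by exact: exprn_ile1 hh.1 hh.2.
  have := @mk_lb R (eta (k + (J + j)) z) ltac:(rewrite -/K in eb; lra).
  move=> h; rewrite -/K in eb; lra.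
set c := \prod_(i < J) nsq (mk (eta (k + i) z)).
have c0 : 0 < c by apply: prodr_gt0 => i _; exact: hg.
have lb : forall N, c / 2 <= nsq (Fc k (N + J) z, Fs k (N + J) z).
  move=> N; rewrite (@nsq_prod R q1 q2) addnC big_split_ord /= -/c.
  have e1 : forall i, 0 <= (2^-1 : R) ^+ i.+2 <= 1.
    have hh : (0:R) <= 2^-1 /\ (2^-1 : R) <= 1 by split; lra.
    by move=> i; rewrite exprn_ge0 ?hh.1 //= exprn_ile1 // ?hh.1 ?hh.2.
  have w := @weier R N _ e1.
  rewrite (@geom_sum R) in w.
  have pr : \prod_(i < N) (1 - (2^-1 : R) ^+ i.+2) <=
            \prod_(i < N) nsq (mk (eta (k + rshift J i) z)).
    apply: ler_prod => i _; apply/andP; split.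
      by rewrite subr_ge0; have /andP[] := e1 i.
    exact: tail.
  have : (0 : R) <= 2^-1 ^+ N.+1 by apply: exprn_ge0; lra.
  set P := \prod_(i < N) nsq _ in pr *.
  set Q := \prod_(i < N) _ in w pr.
  nra.
have hu : (fun N => nsq (Fc k (N + J) z, Fs k (N + J) z)) @ \oo --> (0 : R).
  have hc := @nu_Fc R q1 q2 k mu z hnu; rewrite -(cvg_shiftn J) hC in hc.
  have hs := @nu_Fs R q1 q2 k mu z hnu; rewrite -(cvg_shiftn J) hS in hs.
  rewrite /nsq /=; under eq_fun do rewrite !expr2.
  rewrite -[0 : R](addr0 0) -[X in X + _](mulr0 0) -[X in _ + X](mulr0 0).
  by apply: cvgD; apply: cvgM.
have hn : \forall N \near \oo, c / 2 <= nsq (Fc k (N + J) z, Fs k (N + J) z).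
  by apply: nearW; exact: lb.
have := limr_ge (cvgP _ hu) hn.
rewrite (cvg_lim _ hu) => h.
have h0 : c / 2 <= 0 by apply: h; exact: _.
lra.
exact: norm_hausdorff.
Qed.

End NV2.

Section Trig2.
Variable R : realType.

Lemma cos3 (x : R) : cos (x *+ 3) = 4 * cos x ^+ 3 - 3 * cos x.
Proof.
have -> : x *+ 3 = x + x + x by rewrite !mulrS mulr0n addr0 addrA.
rewrite !cosD !sinD.
have -> : (cos x * cos x - sin x * sin x) * cos x - (sin x * cos x + cos x * sin x) * sin x
  = cos x ^+ 3 - 3 * cos x * sin x ^+ 2 by ring.
rewrite sin2cos2; ring.
Qed.

Lemma sin3 (x : R) : sin (x *+ 3) = sin x * (3 * cos x ^+ 2 - sin x ^+ 2).
Proof.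
have -> : x *+ 3 = x + x + x by rewrite !mulrS mulr0n addr0 addrA.
rewrite !(cosD, sinD).
have -> : (sin x * cos x + cos x * sin x) * cos x + (cos x * cos x - sin x * sin x) * sin x
  = sin x * (3 * cos x ^+ 2 - sin x ^+ 2) by ring.
by [].
Qed.

Lemma cos_pi3 : cos (pi / 3) = 2^-1 :> R.
Proof.
have hp := @pi_gt0 R.
have c0 : 0 < cos (pi / 3 : R).
  apply: cos_gt0_pihalf; apply/andP; split; lra.
have h : cos ((pi / 3 : R) *+ 3) = -1.
  have -> : (pi / 3 : R) *+ 3 = pi by rewrite -mulr_natr; field.
  exact: cospi.
rewrite cos3 in h.
set c := cos (pi / 3) in c0 h *.
have : (c + 1) * (2 * c - 1) ^+ 2 = 0 by nra.
move/eqP; rewrite mulf_eq0 => /orP[/eqP|]; first by lra.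
rewrite sqrf_eq0 => /eqP; lra.
Qed.

Lemma cos_2pi3 : cos (2 * pi * 3^-1) = - 2^-1 :> R.
Proof.
have -> : 2 * pi * 3^-1 = (pi / 3) *+ 2 :> R by rewrite -mulr_natr; field.
rewrite cos_mulr2n cos_pi3; by field.
Qed.

(* If the mask vanishes at e, then 3 e.1 and 3 e.2 are "integers" *)
Lemma mk0_int (e : R * R) : mk R e = (0, 0) ->
  (cos (2 * pi * e.1) = - 2^-1 /\ sin (2 * pi * e.1) ^+ 2 = 3 / 4) /\
  (cos (2 * pi * e.2) = - 2^-1 /\ sin (2 * pi * e.2) ^+ 2 = 3 / 4).
Proof.
rewrite /mk => -[h1 h2].
set a := 2 * pi * e.1 in h1 h2 *; set b := 2 * pi * e.2 in h1 h2 *.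
have sa := cos2Dsin2 a; have sb := cos2Dsin2 b.
have hb : cos b = -1 - cos a by lra.
have hs : sin b = - sin a by lra.
have ca : cos a = - 2^-1.
  move: sb; rewrite hb hs; nra.
split; split => //; [nra| |nra]; lra.
Qed.

Lemma trip_one (t : R) : cos (2 * pi * t) = - 2^-1 -> sin (2 * pi * t) ^+ 2 = 3 / 4 ->
  forall M : nat, cos (2 * pi * (3 * t * M%:R)) = 1 /\ sin (2 * pi * (3 * t * M%:R)) = 0.
Proof.
move=> hc hs.
have h3 : cos ((2 * pi * t) *+ 3) = 1 /\ sin ((2 * pi * t) *+ 3) = 0.
  rewrite cos3 sin3 hc hs; split; [by field | by rewrite -[X in X ^+ 2]opprK sqrrN -hc; nra].
elim => [|M [IHc IHs]]; first by rewrite mulr0 mulr0 cos0 sin0.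
have -> : 2 * pi * (3 * t * M.+1%:R) = 2 * pi * (3 * t * M%:R) + (2 * pi * t) *+ 3.
  by rewrite -natr1 -mulr_natr; ring.
rewrite (cosD (2 * pi * (3 * t * M%:R))) (sinD (2 * pi * (3 * t * M%:R))) IHc IHs; case: h3 => -> ->; split; ring.
Qed.

End Trig2.

Section Final.
Variables (R : realType) (q1 q2 : nat).
Local Notation eta := (@eta R q1 q2).
Local Notation mk := (@mk R).
Local Notation Cm := (@Cm R).
Local Notation Sm := (@Sm R).

Lemma scale_id (q k j : nat) (a : R) : (1 <= q)%N ->
  3 * (a / (3 * q)%:R ^+ (k + j).+1) * (q * (3 * q) ^ j)%:R = a / (3 * q)%:R ^+ k.
Proof.
move=> hq.
have q0 : (q%:R : R) != 0 by rewrite pnatr_eq0 -lt0n.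
rewrite !(natrM, natrX) exprS exprD.
set y : R := q%:R in q0 *.
field.
rewrite ?mulf_eq0 ?expf_eq0 ?negb_or ?q0 ?andbT //=.
have h3y : 3 * y != 0 by rewrite mulf_neq0.
by rewrite (negbTE h3y) !andbF.
Qed.

Lemma U k mu (l l0 : R * R) : (1 <= q1)%N -> (1 <= q2)%N -> is_nu q1 q2 k mu ->
  (l = l0 \/ (Cm mu (l.1 - l0.1, l.2 - l0.2) = 0 /\ Sm mu (l.1 - l0.1, l.2 - l0.2) = 0)) ->
  (cos (2 * pi * ((l.1 - l0.1) / (3 * q1)%:R ^+ k)) = 1 /\
   sin (2 * pi * ((l.1 - l0.1) / (3 * q1)%:R ^+ k)) = 0) /\
  (cos (2 * pi * ((l.2 - l0.2) / (3 * q2)%:R ^+ k)) = 1 /\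
   sin (2 * pi * ((l.2 - l0.2) / (3 * q2)%:R ^+ k)) = 0).
Proof.
move=> h1 h2 hnu [->|[hC hS]].
  by rewrite !subrr !mul0r !mulr0 cos0 sin0.
have [j hj] := @NV R q1 q2 k mu _ h1 h2 hnu hC hS.
have [[c1 s1] [c2 s2]] := @mk0_int R _ hj.
have t1 := @trip_one R _ c1 s1 (q1 * (3 * q1) ^ j).
have t2 := @trip_one R _ c2 s2 (q2 * (3 * q2) ^ j).
rewrite /= scale_id // in t1; rewrite /= scale_id // in t2.
Qed.

End Final.

Section Final2.
Variable R : realType.

Lemma mask_shift (u1 u2 : R) :
  cos (2 * pi * u1) = 1 -> sin (2 * pi * u1) = 0 ->
  cos (2 * pi * u2) = 1 -> sin (2 * pi * u2) = 0 ->
  mk R (u1 - 3^-1, u2 - 2 / 3) = (0, 0) /\ mk R (3^-1 - u1, 2 / 3 - u2) = (0, 0).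
Proof.
move=> c1 s1 c2 s2.
set y : R := 2 * pi * 3^-1.
have cy : cos y = - 2^-1 by exact: cos_2pi3.
have sy := cos2Dsin2 y.
have E1 : 2 * pi * (u1 - 3^-1) = 2 * pi * u1 - y by rewrite /y; ring.
have E2 : 2 * pi * (u2 - 2 / 3) = 2 * pi * u2 - y *+ 2 by rewrite /y mulr2n; ring.
have E3 : 2 * pi * (3^-1 - u1) = y - 2 * pi * u1 by rewrite /y; ring.
have E4 : 2 * pi * (2 / 3 - u2) = y *+ 2 - 2 * pi * u2 by rewrite /y mulr2n; ring.
rewrite /mk /= E1 E2 E3 E4 !cosB !sinB c1 s1 c2 s2 cos_mulr2n sin_mulr2n cy.
rewrite !mulr2n.
by split; congr (_, _); field.
Qed.

End Final2.

Theorem lemma2p7 (R : realType) (q1 q2 n : nat)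
    (nu_n nu_nm1 : probability (R * R)%type R) :
  (1 <= q1)%N -> (q1 <= q2)%N -> (1 <= n)%N ->
  is_nu q1 q2 n nu_n -> is_nu q1 q2 n.-1 nu_nm1 ->
  forall L : set (R * R), orthogonal_set nu_n L ->
    orthogonal_set nu_nm1 L /\ ~ maximal_orthogonal_set nu_nm1 L.
Proof.
move=> h1 h12 hn hnu hnu1 L [cL oL].
have h2 : (1 <= q2)%N by apply: leq_trans h12.
case: n hn hnu hnu1 => [//|m] _ hnu hnu1 /=.
rewrite /= in hnu1.
have Z : forall z, mk R (eta R q1 q2 m z) = (0, 0) ->
    Cm R nu_nm1 z = 0 /\ Sm R nu_nm1 z = 0.
  move=> z hz; have [-> ->] := @conv_id R q1 q2 m nu_nm1 nu_n z hnu1 hnu.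
  by rewrite hz /= !mul0r addr0 subr0.
have part1 : orthogonal_set nu_nm1 L.
  split => // l l' Ll Ll' nll.
  have [hC hS] := oL l l' Ll Ll' nll.
  have := @conv_id R q1 q2 m nu_nm1 nu_n (l.1 - l'.1, l.2 - l'.2) hnu1 hnu.
  rewrite /Cm /Sm hC hS => -[-> ->].
  by rewrite !mulr0 subr0 addr0.
split => //.
move=> [_ hmax].
case: (pselect (exists l0, L l0)) => [[l0 Ll0]|nE]; last first.
  have o0 : orthogonal_set nu_nm1 [set (0 : R * R)].
    split; first exact: countable1.
    by move=> l l' -> -> /(_ erefl).
  have E := hmax _ o0.
  have : [set (0 : R * R)] = L by apply: E => x /= Lx; exfalso; apply: nE; exists x.
  by move=> E'; apply: nE; exists 0; rewrite -E'.
set X1 : R := (3 * q1)%:R ^+ m.+1.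
set X2 : R := (3 * q2)%:R ^+ m.+1.
have X10 : X1 != 0 by rewrite /X1 expf_neq0 // pnatr_eq0 muln_eq0 negb_or /= -lt0n.
have X20 : X2 != 0 by rewrite /X2 expf_neq0 // pnatr_eq0 muln_eq0 negb_or /= -lt0n.
set p : R * R := (l0.1 + X1 / 3, l0.2 + 2 * X2 / 3).
have HU : forall l, L l ->
  (cos (2 * pi * ((l.1 - l0.1) / X1)) = 1 /\ sin (2 * pi * ((l.1 - l0.1) / X1)) = 0) /\
  (cos (2 * pi * ((l.2 - l0.2) / X2)) = 1 /\ sin (2 * pi * ((l.2 - l0.2) / X2)) = 0).
  move=> l Ll; apply: (@U R q1 q2 m.+1 nu_n l l0 h1 h2 hnu).
  have [->|ne] := eqVneq l l0; first by left.
  by right; apply: oL => //; apply/eqP.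
have key : forall l, L l ->
  (Cm R nu_nm1 (l.1 - p.1, l.2 - p.2) = 0 /\ Sm R nu_nm1 (l.1 - p.1, l.2 - p.2) = 0) /\
  (Cm R nu_nm1 (p.1 - l.1, p.2 - l.2) = 0 /\ Sm R nu_nm1 (p.1 - l.1, p.2 - l.2) = 0).
  move=> l Ll; have [[c1 s1] [c2 s2]] := HU l Ll.
  have [M1 M2] := @mask_shift R _ _ c1 s1 c2 s2.
  split; apply: Z; [rewrite -M1 | rewrite -M2]; rewrite /eta /p /= -/X1 -/X2;
    congr (mk R (_, _)); by field.
have Lp : ~ L p.
  move=> Lp; have [[c1 _] _] := HU p Lp.
  move: c1; rewrite /p /=.
  have -> : (l0.1 + X1 / 3 - l0.1) / X1 = 3^-1 by field.
  rewrite cos_2pi3; lra.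
have oL' : orthogonal_set nu_nm1 (L `|` [set p]).
  split.
    have -> : L `|` [set p] = \bigcup_(b in [set: bool]) (if b then L else [set p]).
      apply/seteqP; split => x.
        by case => [Lx|->]; [exists true | exists false].
      by case => -[] _ /=; [left | right].
    apply: bigcup_countable; first exact: countableP.
    by move=> [] _ //; exact: countable1.
  move=> l l' [Ll|->] [Ll'|->] nll.
  - exact: part1.2.
  - exact: (key l Ll).1.
  - exact: (key l' Ll').2.
  - by [].
have E := hmax _ oL' (fun x Lx => or_introl Lx).
by apply: Lp; rewrite -E; right.
Qed.
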